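(* Let $\gamma>0$, $\upsilon>0$ and $0<p_1<p_2<1$. Let $X\sim \mathrm{RBTLL}(\gamma,\upsilon,p_1)$ and $Y\sim \mathrm{RBTLL}(\gamma,\upsilon,p_2)$, with densities $f_X$ and $f_Y$. Then $X$ is smaller than $Y$ in the likelihood ratio order; that is, the function $x\mapsto f_X(x)/f_Y(x)$ is decreasing on $(0,\infty)$.
   Context: The log-logistic distribution with parameters $\gamma,\upsilon>0$ has CDF $G(x)=\frac{e^{\gamma}x^{\upsilon}}{1+e^{\gamma}x^{\upsilon}}$ and PDF $g(x)=\frac{e^{\gamma}\upsilon x^{\upsilon-1}}{(1+e^{\gamma}x^{\upsilon})^2}$, $x>0$. The record-based transmuted log-logistic distribution $\mathrm{RBTLL}(\gamma,\upsilon,p)$, with $\gamma,\upsilon>0$ and $0<p<1$, is the distribution on $(0,\infty)$ with CDF $F(x)=G(x)+p\,(1-G(x))\log(1-G(x))$ and PDF \[ f(x)=\frac{e^{\gamma}\upsilon x^{\upsilon-1}}{(1+e^{\gamma}x^{\upsilon})^2}\left[1+p\left(\log(1+e^{\gamma}x^{\upsilon})-1\right)\right],\qquad x>0. \] *)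

(* Defs.v *)
From Stdlib Require Import Reals.
Open Scope R_scope.

Definition rbtll_pdf (gamma upsilon p x : R) : R :=
  exp gamma * upsilon * Rpower x (upsilon - 1)
    / (1 + exp gamma * Rpower x upsilon) ^ 2
  * (1 + p * (ln (1 + exp gamma * Rpower x upsilon) - 1)).

(* Main.v *)
Require Import Defs.
From Stdlib Require Import Reals Lra.
Open Scope R_scope.

Lemma ratio_simp (K a b : R) : 0 < K -> 0 < b -> (K * a) / (K * b) = a / b.
Proof. intros. field. lra. Qed.

Theorem theorem1 (gamma upsilon p1 p2 : R)
  (hg : 0 < gamma) (hu : 0 < upsilon)
  (hp1 : 0 < p1) (hp12 : p1 < p2) (hp2 : p2 < 1) :
  forall x y : R, 0 < x -> x < y ->
    rbtll_pdf gamma upsilon p1 y / rbtll_pdf gamma upsilon p2 y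
    <= rbtll_pdf gamma upsilon p1 x / rbtll_pdf gamma upsilon p2 x.
Proof.
  intros x y hx hxy.
  unfold rbtll_pdf.
  assert (HK : forall z, 0 < z -> 0 < exp gamma * upsilon * Rpower z (upsilon - 1)
                 / (1 + exp gamma * Rpower z upsilon) ^ 2).
  { intros z hz. unfold Rdiv. apply Rmult_lt_0_compat.
    - apply Rmult_lt_0_compat; [apply Rmult_lt_0_compat; [apply exp_pos|lra]|].
      unfold Rpower; apply exp_pos.
    - apply Rinv_0_lt_compat. apply pow_lt.
      assert (0 < exp gamma * Rpower z upsilon) by
        (apply Rmult_lt_0_compat; [apply exp_pos|unfold Rpower; apply exp_pos]).
      lra. }
  assert (HL : forall z, 0 < z -> 0 < ln (1 + exp gamma * Rpower z upsilon)).
  { intros z hz. rewrite <- ln_1; apply ln_increasing; [lra|].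
    assert (0 < exp gamma * Rpower z upsilon) by
        (apply Rmult_lt_0_compat; [apply exp_pos|unfold Rpower; apply exp_pos]).
    lra. }
  assert (Hmono : ln (1 + exp gamma * Rpower x upsilon) <
                  ln (1 + exp gamma * Rpower y upsilon)).
  { apply ln_increasing.
    - assert (0 < exp gamma * Rpower x upsilon) by
        (apply Rmult_lt_0_compat; [apply exp_pos|unfold Rpower; apply exp_pos]).
      lra.
    - assert (Rpower x upsilon < Rpower y upsilon) by (apply Rlt_Rpower_l; lra).
      pose proof (exp_pos gamma). nra. }
  pose proof (HL x hx) as Lx. pose proof (HL y ltac:(lra)) as Ly.
  set (tx := ln (1 + exp gamma * Rpower x upsilon)) in *.
  set (ty := ln (1 + exp gamma * Rpower y upsilon)) in *.
  assert (b1 : 0 < 1 + p2 * (tx - 1)) by nra.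
  assert (b2 : 0 < 1 + p2 * (ty - 1)) by nra.
  rewrite (ratio_simp _ _ _ (HK y ltac:(lra)) b2).
  rewrite (ratio_simp _ _ _ (HK x hx) b1).
  apply (Rmult_le_reg_r ((1 + p2 * (tx - 1)) * (1 + p2 * (ty - 1)))).
  { nra. }
  replace ((1 + p1 * (ty - 1)) / (1 + p2 * (ty - 1)) * ((1 + p2 * (tx - 1)) * (1 + p2 * (ty - 1))))
    with ((1 + p1 * (ty - 1)) * (1 + p2 * (tx - 1))) by (field; lra).
  replace ((1 + p1 * (tx - 1)) / (1 + p2 * (tx - 1)) * ((1 + p2 * (tx - 1)) * (1 + p2 * (ty - 1))))
    with ((1 + p1 * (tx - 1)) * (1 + p2 * (ty - 1))) by (field; lra).
  nra.
Qed.
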